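(* For every $n\in\mathbb{N}$ and $\varepsilon\in(0,1)$, the set $\mathsf{PAULI}_n$ of $n$-qubit Pauli channels admits a uniformly $\varepsilon$-approximate sample compression scheme of size $\mathcal{O}\big(\frac{n}{\varepsilon^2}\big)$. This sample compression scheme even succeeds on training data whose labels have been corrupted by adversarial label noise of strength $\varepsilon/3$: for every $\mathcal{P}\in\mathsf{PAULI}_n$ and every finite sample $S=\{(E^{(i)},y_i)\}_{i=1}^m$ with $|y_i-f_{\mathcal{P}}(E^{(i)})|\leq\varepsilon/3$ for all $i$, the reconstructed function $\hat f=\rho(\kappa(S))$ satisfies $|\hat f(E^{(i)})-f_{\mathcal{P}}(E^{(i)})|\leq\varepsilon$ for all $i$.
   Context: $\mathsf{X}$ is the set of channel test operators on two $n$-qubit systems $A,B$: $E_{A,B}\geq0$ with $E_{A,B}\leq\sigma_A\otimes\mathbb{1}_B$ for some density operator $\sigma_A$. An $n$-qubit Pauli channel is $\mathcal{P}(\rho)=\sum_{\vec z,\vec x}p_{\vec z,\vec x}P^{\vec z,\vec x}\rho P^{\vec z,\vec x\dagger}$ ($P^{\vec z,\vec x}=\mathrm{i}^{\vec z\cdot\vec x}Z^{\vec z}X^{\vec x}$, $(p_{\vec z,\vec x})$ a probability vector), identified with $f_{\mathcal{P}}:\mathsf{X}\to[0,1]$, $f_{\mathcal{P}}(E)=\mathrm{Tr}[E\,C^{\mathcal{P}}_{A,B}]$, with Choi matrix $C^{\mathcal{P}}_{A,B}=\sum_{i,j}|i\rangle\langle j|\otimes\mathcal{P}(|i\rangle\langle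 j|)$. A uniformly $\varepsilon$-approximate sample compression scheme of size $k$ for a class $\mathcal{F}\subseteq[0,1]^{\mathsf{X}}$ is a pair of maps: a compression map $\kappa$ sending each finite sample $S\subseteq\mathsf{X}\times[0,1]$ to a subsample $\kappa(S)\subseteq S$ of size at most $k$, and a reconstruction map $\rho$ sending such subsamples to functions $\mathsf{X}\to[0,1]$, such that for all $f\in\mathcal{F}$ and all $S=\{(x_i,f(x_i))\}_{i=1}^m$ we have $\max_i|\rho(\kappa(S))(x_i)-f(x_i)|\leq\varepsilon$. *)

(* Defs.v *)
From HB Require Import structures.
From mathcomp Require Import all_boot all_order all_algebra.
From mathcomp Require Import finmap.
From mathcomp Require Import complex mxtens.
From mathcomp Require Import reals.

Set Implicit Arguments.
Unset Strict Implicit.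
Unset Printing Implicit Defensive.

Import Order.TTheory GRing.Theory Num.Theory.
Local Open Scope ring_scope.
Local Open Scope fset_scope.

Section Pauli.
Variable R : realType.
Local Notation C := R[i].

(* n-qubit Hilbert space dimension; computational basis indexed by 'I_(2^n),
   the k-th qubit of basis vector |a> being the k-th binary digit of a. *)
Definition qdim (n : nat) := (2 ^ n)%N.
Definition qbit (n : nat) (a : 'I_(qdim n)) (k : 'I_n) : bool := odd (a %/ 2 ^ k).

Definition bits (n : nat) := {ffun 'I_n -> bool}.

Definition adjmx (m p : nat) (A : 'M[C]_(m, p)) : 'M[C]_(p, m) :=
  (map_mx (@conjc R) A)^T.

(* positive semidefinite: <v, A v> >= 0 for all v (in the order of C = R[i],
   this means the quadratic form is real and nonnegative) *)
Definition psdmx (m : nat) (A : 'M[C]_m) : Prop :=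
  forall v : 'cV[C]_m, 0 <= (adjmx v *m A *m v) 0 0.

Definition density (m : nat) (s : 'M[C]_m) : Prop := psdmx s /\ \tr s = 1.

(* channel test operators on A,B (each n qubits), operators on A (x) B;
   A is the first tensor factor *)
Definition is_test (n : nat) (E : 'M[C]_(qdim n * qdim n)) : Prop :=
  psdmx E /\
  exists sigma : 'M[C]_(qdim n), density sigma /\
    psdmx ((sigma *t (1%:M : 'M[C]_(qdim n))) - E).

(* X^x = X^{x_1} (x) ... (x) X^{x_n} : |b> |-> |b xor x> *)
Definition Xpow (n : nat) (x : bits n) : 'M[C]_(qdim n) :=
  \matrix_(a, b) (if [forall k, qbit a k == (qbit b k (+) x k)] then 1 else 0).
(* Z^z = Z^{z_1} (x) ... (x) Z^{z_n} : |a> |-> (-1)^{z.a} |a> *)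
Definition Zpow (n : nat) (z : bits n) : 'M[C]_(qdim n) :=
  \matrix_(a, b) (if a == b then (-1) ^+ #|[set k | z k && qbit a k]| else 0).

Definition pauli (n : nat) (z x : bits n) : 'M[C]_(qdim n) :=
  ('i%C) ^+ #|[set k | z k && x k]| *: (Zpow z *m Xpow x).

Definition pauli_prob (n : nat) (p : {ffun bits n * bits n -> R}) : Prop :=
  (forall zx, 0 <= p zx) /\ \sum_zx p zx = 1.

Definition pauli_channel (n : nat) (p : {ffun bits n * bits n -> R})
    (rho : 'M[C]_(qdim n)) : 'M[C]_(qdim n) :=
  \sum_zx ((p zx)%:C%C *: (pauli zx.1 zx.2 *m rho *m adjmx (pauli zx.1 zx.2))).

Definition choi (n : nat) (p : {ffun bits n * bits n -> R}) : 'M[C]_(qdim n * qdim n) :=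
  \sum_(i < qdim n) \sum_(j < qdim n)
     ((delta_mx i j : 'M[C]_(qdim n)) *t pauli_channel p (delta_mx i j)).

(* f_P(E) = Tr[E C^P] (real for test operators; we take the real part) *)
Definition fP (n : nat) (p : {ffun bits n * bits n -> R})
    (E : 'M[C]_(qdim n * qdim n)) : R :=
  complex.Re (\tr (E *m choi p)).

Definition example (n : nat) := ('M[C]_(qdim n * qdim n) * R)%type.

Definition pauli_compression_scheme (n : nat) (eps eta : R) (k : nat)
    (kappa : {fset example n} -> {fset example n})
    (rho : {fset example n} -> 'M[C]_(qdim n * qdim n) -> R) : Prop :=
  (forall S : {fset example n}, kappa S `<=` S /\ (#|` kappa S| <= k)%N) /\
  (forall (S : {fset example n}) E, is_test E -> 0 <= rho S E <= 1) /\
  (forall p, pauli_prob p ->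
     forall S : {fset example n},
       (forall s, s \in S -> is_test s.1 /\ s.2 = fP p s.1) ->
       forall s, s \in S -> `|rho (kappa S) s.1 - fP p s.1| <= eps) /\
  (forall p, pauli_prob p ->
     forall S : {fset example n},
       (forall s, s \in S -> [/\ is_test s.1, 0 <= s.2 <= 1 &
                                 `|s.2 - fP p s.1| <= eta]) ->
       forall s, s \in S -> `|rho (kappa S) s.1 - fP p s.1| <= eps).

End Pauli.

(* Main.v *)
Require Import Defs.
From HB Require Import structures.
From mathcomp Require Import all_boot all_order all_algebra.
From mathcomp Require Import finmap complex mxtens reals.
From mathcomp Require Import sequences exp.
From mathcomp Require Import ring lra.
Import Order.TTheory GRing.Theory Num.Theory.

Set Implicit Arguments.
Unset Strict Implicit.
Unset Printing Implicit Defensive.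

Lemma nat_bits_inj n a b : (a < 2 ^ n)%N -> (b < 2 ^ n)%N ->
  (forall k, (k < n)%N -> odd (a %/ 2 ^ k) = odd (b %/ 2 ^ k)) -> a = b.
Proof.
elim: n a b => [|n IH] a b.
  by rewrite expn0 !ltnS !leqn0 => /eqP -> /eqP ->.
move=> ha hb H.
have h0 := H 0%N (ltn0Sn n); rewrite expn0 !divn1 in h0.
have Hd : a %/ 2 = b %/ 2.
  apply: IH.
  - by rewrite ltn_divLR // -expnSr.
  - by rewrite ltn_divLR // -expnSr.
  move=> k hk; rewrite -!divnMA -expnS; exact: H.
by rewrite (divn_eq a 2) (divn_eq b 2) Hd !modn2 h0.
Qed.

Local Open Scope ring_scope.

Section Learner.
Variables (R : realType) (J : finType) (X : choiceType).
Local Notation T := (X * R)%type.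
Variable ft : X -> J -> R.
Variable leT : rel T.
Hypothesis leT_total : total leT.
Hypothesis leT_trans : transitive leT.
Hypothesis leT_anti : antisymmetric leT.
Variables eta tau : R.

Definition Wt (u : J -> R) := \sum_j expR (eta * u j).
Definition qw (u : J -> R) j := expR (eta * u j) / Wt u.
Definition predu (u : J -> R) (x : X) := \sum_j qw u j * ft x j.
Definition mistake u (t : T) := tau < `|predu u t.1 - t.2|.
Definition zv u (t : T) (j : J) := if t.2 < predu u t.1 then ft t.1 j else 1 - ft t.1 j.
Definition upd u t := fun j => u j - zv u t j.

Fixpoint minl (m : T) (s : seq T) := 
  match s with [::] => m | y :: s' => minl (if leT m y then m else y) s' end.
Definition pickmin (s : seq T) := if s is x :: s' then Some (minl x s') else None.

Lemma minl_in m s : minl m s \in m :: s.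
Proof.
elim: s m => [|y s IH] m /=; first by rewrite mem_head.
case: (leT m y); move: (IH m) (IH y); rewrite !inE => H1 H2.
  by case/orP: H1 => ->; rewrite ?orbT.
by case/orP: H2 => ->; rewrite ?orbT.
Qed.

Lemma minl_le m s y : y \in m :: s -> leT (minl m s) y.
Proof.
elim: s m y => [|z s IH] m y /=.
  by rewrite inE => /eqP ->; case/orP: (leT_total m m).
rewrite !inE => Hy.
case Hmz: (leT m z).
  have Hm := IH m m (mem_head _ _).
  case/or3P: Hy => [/eqP ->|/eqP ->|Hy]; first exact: Hm.
    exact: leT_trans Hm Hmz.
  by apply: IH; rewrite inE Hy orbT.
have Hz := IH z z (mem_head _ _).
have Hzm : leT z m by case/orP: (leT_total m z) => //; rewrite Hmz.
case/or3P: Hy => [/eqP ->|/eqP ->|Hy]; first exact: leT_trans Hz Hzm.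
  exact: Hz.
by apply: IH; rewrite inE Hy orbT.
Qed.

Lemma pickminP s m : pickmin s = Some m -> m \in s /\ forall y, y \in s -> leT m y.
Proof.
case: s => [|x s] //= [<-]; split; first exact: minl_in.
by move=> y; apply: minl_le.
Qed.

Lemma pickminN s : pickmin s = None -> s = [::].
Proof. by case: s. Qed.

Fixpoint run (s : seq T) (f : nat) (u : J -> R) : seq T :=
  if f is f'.+1 then
    match pickmin [seq t <- s | mistake u t] with
    | Some t => t :: run s f' (upd u t)
    | None => [::] end
  else [::].

Definition final s f u := foldl upd u (run s f u).

Lemma run_sub s f u : {subset run s f u <= s}.
Proof.
elim: f u => [|f IH] u //= x.
case E: pickmin => [t|] //.
have [tin _] := pickminP E; rewrite mem_filter in tin.
rewrite inE => /orP [/eqP ->|]; first by case/andP: tin.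
exact: IH.
Qed.

Lemma size_run s f u : (size (run s f u) <= f)%N.
Proof.
elim: f u => [|f IH] u //=.
by case: pickmin => [t|] //=; rewrite ltnS.
Qed.

Lemma run_hered s s' f u : {subset run s f u <= s'} -> {subset s' <= s} ->
  run s' f u = run s f u.
Proof.
elim: f u => [|f IH] u //= Hr Hs.
case E: (pickmin [seq t <- s | mistake u t]) => [t|]; rewrite E in Hr.
  have [tin tmin] := pickminP E.
  have ts' : t \in s' by apply: Hr; rewrite mem_head.
  have tf' : t \in [seq t <- s' | mistake u t].
    by rewrite mem_filter ts' andbT; rewrite mem_filter in tin; case/andP: tin.
  case E': (pickmin [seq t <- s' | mistake u t]) => [t'|]; last first.
    by rewrite (pickminN E') in tf'.
  have [t'in t'min] := pickminP E'.
  have -> : t' = t.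
    apply: leT_anti; rewrite t'min //= tmin //.
    rewrite mem_filter in t'in; case/andP: t'in => h1 h2.
    by rewrite mem_filter h1 /= Hs.
  congr (_ :: _); apply: IH => // x hx; apply: Hr.
  by rewrite inE hx orbT.
case E': (pickmin [seq t <- s' | mistake u t]) => [t'|] //.
have [t'in _] := pickminP E'.
have : t' \in [seq t <- s | mistake u t].
  rewrite mem_filter in t'in; case/andP: t'in => h1 h2.
  by rewrite mem_filter h1 /= Hs.
by rewrite (pickminN E).
Qed.

Lemma run_done s f u : (size (run s f u) < f)%N ->
  forall t, t \in s -> ~~ mistake (foldl upd u (run s f u)) t.
Proof.
elim: f u => [|f IH] u //=.
case E: pickmin => [t|] /=.
  by rewrite ltnS => H; apply: IH.
move=> _ t ts; apply/negP => Hm.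
have : t \in [seq t <- s | mistake u t] by rewrite mem_filter Hm.
by rewrite (pickminN E).
Qed.

Variables (p : J -> R) (mu noise : R).
Hypothesis p_ge0 : forall j, 0 <= p j.
Hypothesis p_sum1 : \sum_j p j = 1.
Hypothesis mu_gt0 : 0 < mu.
Hypothesis eta_def : eta = mu / 2.
Hypothesis tau_def : tau = noise + mu.

Definition dotp (a b : J -> R) := \sum_j a j * b j.
Definition good (t : T) :=
  (forall j, 0 <= ft t.1 j <= 1) /\ `|t.2 - dotp p (ft t.1)| <= noise.
Definition c0 := mu ^+ 2 / 4.
Definition Inv u (m : nat) :=
  Wt u <= #|J|%:R * expR (eta * dotp p u - m%:R * c0).

Lemma J_inhab : exists j : J, true.
Proof.
case: (pickP (@predT J)) => [j _|H]; first by exists j.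
move: p_sum1; rewrite big_pred0 // => /eqP; rewrite eq_sym oner_eq0.
by [].
Qed.

Lemma Wt_gt0 u : 0 < Wt u.
Proof.
have [j0 _] := J_inhab.
rewrite /Wt (bigD1 j0) //=; apply: lt_le_trans (expR_gt0 (eta * u j0)) _.
by rewrite lerDl; apply: sumr_ge0 => j _; apply/ltW/expR_gt0.
Qed.

Lemma p_le1 j : p j <= 1.
Proof.
rewrite -p_sum1 (bigD1 j) //= lerDl.
by apply: sumr_ge0 => k _.
Qed.

Lemma lower u : expR (eta * dotp p u) <= Wt u.
Proof.
set m := eta * dotp p u.
have H1 : \sum_j p j * expR (eta * u j) <= Wt u.
  apply: ler_sum => j _.
  by rewrite ler_piMl ?p_le1 // ltW // expR_gt0.
apply: le_trans H1.
have H2 : forall j, p j * (expR m * (1 + (eta * u j - m))) <= p j * expR (eta * u j).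
  move=> j; apply: ler_wpM2l => //.
  have -> : eta * u j = m + (eta * u j - m) by rewrite [RHS]addrC subrK.
  rewrite expRD [m + _]addrC subrK; apply: ler_wpM2l; first exact/ltW/expR_gt0.
  exact: expR_ge1Dx.
apply: le_trans (ler_sum _ (fun j _ => H2 j)).
have E : \sum_j p j * (expR m * (1 + (eta * u j - m))) =
   \sum_j (expR m * p j + (expR m * eta) * (p j * u j) - (expR m * m) * p j).
  by apply: eq_bigr => j _; ring.
rewrite E sumrB big_split /= -!mulr_sumr p_sum1 /m /dotp.
by rewrite le_eqVlt; apply/orP; left; apply/eqP; ring.
Qed.

Lemma Inv0 : Inv (fun _ => 0) 0.
Proof.
rewrite /Inv /Wt /dotp /=.
have -> : \sum_j p j * 0 = 0 by rewrite big1 // => j _; rewrite mulr0.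
have -> : \sum_(j : J) expR (eta * 0) = \sum_(j : J) (1 : R).
  by apply: eq_bigr => j _; rewrite mulr0 expR0.
by rewrite mulr0 mul0r subr0 expR0 mulr1 sumr_const.
Qed.

Lemma sum_qw u : \sum_j qw u j = 1.
Proof.
rewrite /qw -mulr_suml divff //.
by apply: lt0r_neq0; apply: Wt_gt0.
Qed.

Lemma expN_le (y : R) : 0 <= y -> expR (- y) <= 1 - y + y ^+ 2.
Proof.
move=> y0; rewrite expRN.
have h1 : 0 < 1 + y by lra.
apply: (@le_trans _ _ ((1 + y)^-1)).
  by rewrite lef_pV2 ?posrE ?expR_gt0 //; exact: expR_ge1Dx.
rewrite -div1r ler_pdivrMr //; nra.
Qed.


Lemma eta_gt0 : 0 < eta.
Proof. by rewrite eta_def divr_gt0. Qed.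

Lemma upd_W u t : good t ->
  Wt (upd u t) <= Wt u * expR (- (eta * \sum_j qw u j * zv u t j) + eta ^+ 2).
Proof.
move=> [Hft _].
have Hz : forall j, 0 <= zv u t j <= 1.
  move=> j; rewrite /zv; case: ifP => _; have := Hft j; lra.
have W0 : Wt u != 0 by apply: lt0r_neq0; apply: Wt_gt0.
have e0 := eta_gt0.
have Ha : Wt u * \sum_j qw u j * zv u t j = \sum_j expR (eta * u j) * zv u t j.
  rewrite mulr_sumr; apply: eq_bigr => j _; rewrite /qw; field; exact: W0.
have H1 : Wt (upd u t) <= \sum_j expR (eta * u j) * (1 - eta * zv u t j + eta ^+ 2).
  apply: ler_sum => j _.
  rewrite /upd mulrBr expRD; apply: ler_wpM2l; first exact/ltW/expR_gt0.
  have hz := Hz j.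
  apply: le_trans (expN_le _) _.
    by apply: mulr_ge0; [exact: ltW|case/andP: hz].
  have : (eta * zv u t j) ^+ 2 <= eta ^+ 2.
    case/andP: hz => h0 h1.
    have hz2 : zv u t j ^+ 2 <= 1 by rewrite expr_le1.
    rewrite exprMn; apply: ler_piMr; first by rewrite exprn_ge0 // ltW.
    exact: hz2.
  lra.
apply: le_trans H1 _.
have -> : \sum_j expR (eta * u j) * (1 - eta * zv u t j + eta ^+ 2) =
   Wt u * (1 - eta * \sum_j qw u j * zv u t j + eta ^+ 2).
  rewrite mulrDr mulrBr mulr1 mulrCA Ha /Wt.
  rewrite mulr_suml mulr_sumr -sumrB -big_split /=.
  by apply: eq_bigr => j _; ring.
apply: ler_wpM2l; first exact/ltW/Wt_gt0.
have := expR_ge1Dx (- (eta * \sum_j qw u j * zv u t j) + eta ^+ 2); lra.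
Qed.

Lemma step u m t : good t -> mistake u t -> Inv u m -> Inv (upd u t) m.+1.
Proof.
move=> Hg Hm HI.
have HW := upd_W u Hg.
move: Hg => [Hft Hn].
set a := \sum_j qw u j * zv u t j in HW.
set b := dotp p (zv u t).
have Hab : mu <= a - b.
  move: Hm; rewrite /mistake /a /b /dotp.
  rewrite ler_norml in Hn.
  case H: (t.2 < predu u t.1).
    have Ez : forall j, zv u t j = ft t.1 j by move=> j; rewrite /zv H.
    under eq_bigr do rewrite Ez.
    under [X in _ <= _ - X]eq_bigr do rewrite Ez.
    rewrite gtr0_norm ?subr_gt0 // -/(predu u t.1) -/(dotp p (ft t.1)).
    move: Hn; rewrite tau_def; lra.
  have Ez : forall j, zv u t j = 1 - ft t.1 j by move=> j; rewrite /zv H.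
  under eq_bigr do rewrite Ez.
  under [X in _ <= _ - X]eq_bigr do rewrite Ez.
  have -> : \sum_j qw u j * (1 - ft t.1 j) = 1 - predu u t.1.
    rewrite /predu -[in RHS](sum_qw u) -sumrB; apply: eq_bigr => j _; ring.
  have -> : \sum_j p j * (1 - ft t.1 j) = 1 - dotp p (ft t.1).
    rewrite /dotp -[in RHS]p_sum1 -sumrB; apply: eq_bigr => j _; ring.
  move: H => /negbT; rewrite -leNgt => H.
  rewrite ler0_norm ?subr_le0 //.
  move: Hn; rewrite tau_def; lra.
have Hdp : dotp p (upd u t) = dotp p u - b.
  by rewrite /dotp /b /dotp -sumrB; apply: eq_bigr => j _; rewrite /upd /=; ring.
rewrite /Inv; apply: le_trans HW _.
apply: le_trans (ler_wpM2r (ltW (expR_gt0 _)) HI) _.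
rewrite -mulrA -expRD; apply: ler_wpM2l; first exact: ler0n.
rewrite ler_expR Hdp -natr1.
have := ler_wpM2l (ltW mu_gt0) Hab.
rewrite /c0 eta_def; nra.
Qed.

Lemma run_inv s f u m : (forall t, t \in s -> good t) -> Inv u m ->
  Inv (foldl upd u (run s f u)) (m + size (run s f u)).
Proof.
elim: f u m => [|f IH] u m Hs HI /=; first by rewrite addn0.
case E: pickmin => [t|] /=; last by rewrite addn0.
have [tin _] := pickminP E; rewrite mem_filter in tin; case/andP: tin => Hm ts.
rewrite -addSnnS; apply: IH => //; exact: step (Hs t ts) Hm HI.
Qed.

Lemma inv_bound u m : Inv u m -> expR (m%:R * c0) <= #|J|%:R.
Proof.
move=> HI; have H := le_trans (lower u) HI.
move: H; rewrite expRD expRN.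
set A := expR (eta * dotp p u); set B := expR (m%:R * c0).
have A0 : 0 < A by apply: expR_gt0.
have B0 : 0 < B by apply: expR_gt0.
move=> H.
have H2 : A * B <= #|J|%:R * (A * B^-1) * B by rewrite ler_wpM2r // ltW.
rewrite -!mulrA mulVf ?lt0r_neq0 // mulr1 mulrC in H2.
by rewrite -(ler_pM2r A0).
Qed.

Variable K : nat.
Hypothesis Kbound : forall M : nat, expR (M%:R * c0) <= #|J|%:R -> (M <= K)%N.

Theorem learn s : (forall t, t \in s -> good t) ->
  forall t, t \in s -> ~~ mistake (final s K (fun _ => 0)) t.
Proof.
move=> Hs t ts.
have := size_run s K (fun _ => 0); rewrite leq_eqVlt => /orP [/eqP Hsz|Hlt].
  apply/negP => Hm.
  have HI := run_inv K Hs Inv0; rewrite add0n Hsz in HI.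
  have := Kbound (inv_bound (step (Hs t ts) Hm HI)).
  by rewrite ltnn.
exact: run_done.
Qed.

End Learner.


Section Bits.
Variable n : nat.
Definition bitv (a : 'I_(qdim n)) : bits n := [ffun k => qbit a k].

Lemma bitv_inj : injective bitv.
Proof.
move=> a b /ffunP H; apply: val_inj; apply: (@nat_bits_inj n); try exact: ltn_ord.
move=> k hk; have := H (Ordinal hk); rewrite !ffunE /qbit /=.
by [].
Qed.

Lemma bitv_bij : bijective bitv.
Proof.
apply: inj_card_bij; first exact: bitv_inj.
by rewrite card_ffun card_bool !card_ord.
Qed.
End Bits.

Section Paulis.
Variable R : realType.
Local Notation C := R[i].
Variable n : nat.

Definition xorv (x w : bits n) : bits n := [ffun k => w k (+) x k].

Lemma xorv_inj x : injective (xorv x).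
Proof.
move=> w w' /ffunP H; apply/ffunP => k; have := H k; rewrite !ffunE.
by case: (w k); case: (w' k); case: (x k).
Qed.

Lemma XpowE x (a b : 'I_(qdim n)) :
  Xpow R x a b = (bitv a == xorv x (bitv b))%:R.
Proof.
rewrite mxE.
have -> : [forall k, qbit a k == qbit b k (+) x k] = (bitv a == xorv x (bitv b)).
  apply/forallP/eqP => [H|H].
    by apply/ffunP => k; rewrite !ffunE; apply/eqP/H.
  by move=> k; have := congr1 (fun f : bits n => f k) H; rewrite !ffunE => ->.
by case: (_ == _).
Qed.

Lemma pauliE z x (a b : 'I_(qdim n)) :
  pauli R z x a b = ('i%C ^+ #|[set k | z k && x k]| *
     (-1) ^+ #|[set k | z k && qbit a k]|) * Xpow R x a b.
Proof.
rewrite /pauli mxE mxE (bigD1 a) //= big1 ?addr0.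
  by rewrite /Zpow mxE eqxx mulrA.
by move=> k /negbTE hk; rewrite /Zpow mxE eq_sym hk mul0r.
Qed.

Lemma conj_i_mul : ('i%C)^*%C * 'i%C = 1 :> R[i].
Proof. by apply/eqP; rewrite eq_complex /=; apply/andP; split; apply/eqP; ring. Qed.

Lemma sum_eq_pair (T : finType) (u v : T) :
  \sum_(w : T) ((w == u)%:R * (w == v)%:R : C) = (u == v)%:R.
Proof.
rewrite (bigD1 u) //= big1 ?addr0 ?eqxx ?mul1r //.
by move=> w /negbTE ->; rewrite mul0r.
Qed.

Lemma pauli_unit z x (a c : 'I_(qdim n)) :
  \sum_b ((pauli R z x b a)^*%C * pauli R z x b c) = (a == c)%:R.
Proof.
have E : forall b, (pauli R z x b a)^*%C * pauli R z x b c =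
   (bitv b == xorv x (bitv a))%:R * (bitv b == xorv x (bitv c))%:R.
  move=> b; rewrite !pauliE !XpowE !rmorphM /= rmorphXn /= rmorph_sign /= conjc_nat.
  set I := 'i%C ^+ _; set s := (-1) ^+ _.
  have -> : (('i%C)^*%C ^+ #|[set k | z k && x k]| * s * (bitv b == xorv x (bitv a))%:R *
    (I * s * (bitv b == xorv x (bitv c))%:R)) =
    ((('i%C)^*%C * 'i%C) ^+ #|[set k | z k && x k]| * (s * s)) * 
      ((bitv b == xorv x (bitv a))%:R * (bitv b == xorv x (bitv c))%:R).
    by rewrite exprMn /I; ring.
  by rewrite conj_i_mul expr1n /s -exprMn mulrNN mulr1 expr1n !mul1r.
under eq_bigr do rewrite E.
have [g gK Kg] := bitv_bij n.
have gb : bijective g by exists (@bitv n).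
rewrite (reindex g (onW_bij _ gb)).
under eq_bigr do rewrite Kg.
rewrite sum_eq_pair.
by congr (_%:R); rewrite (inj_eq (@xorv_inj x)) (inj_eq (@bitv_inj n)).
Qed.
End Paulis.

Lemma sum_tens (R : nmodType) m k (F : 'I_(m * k) -> R) :
  \sum_i F i = \sum_(a < m) \sum_(b < k) F (mxtens_index (a, b)).
Proof.
rewrite pair_big /=.
have hb : bijective (@mxtens_index m k).
  by exists (@mxtens_unindex m k); [exact: mxtens_indexK|exact: mxtens_unindexK].
rewrite (reindex _ (onW_bij _ hb)).
by apply: eq_bigr => -[a b].
Qed.

Section Choi.
Variable R : realType.
Local Notation C := R[i].
Variable n : nat.
Local Notation d := (qdim n).

Definition vP (j : bits n * bits n) : 'cV[C]_(d * d) :=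
  \col_k pauli R j.1 j.2 (mxtens_unindex k).2 (mxtens_unindex k).1.

Lemma vPE j a b : vP j (mxtens_index (a, b)) 0 = pauli R j.1 j.2 b a.
Proof. by rewrite mxE mxtens_indexK. Qed.

Lemma sum_delta2 m (a c : 'I_m) (F : 'I_m -> 'I_m -> C) :
  \sum_i \sum_j (((a == i) && (c == j))%:R * F i j) = F a c.
Proof.
rewrite (bigD1 a) //= [X in _ + X]big1 ?addr0.
  rewrite (bigD1 c) //= [X in _ + X]big1 ?addr0 ?eqxx ?mul1r //.
  by move=> j /negbTE; rewrite eq_sym => ->; rewrite andbF mul0r.
move=> i /negbTE ne; apply: big1 => j _.
by rewrite eq_sym ne /= mul0r.
Qed.

Lemma mul_delta_entry m (A B : 'M[C]_m) a c b e :
  (A *m delta_mx a c *m B) b e = A b a * B c e.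
Proof.
have H1 : forall l, (A *m delta_mx a c) b l = A b a * (l == c)%:R.
  move=> l; rewrite mxE (bigD1 a) //= big1 ?addr0.
    by rewrite mxE eqxx.
  by move=> k /negbTE hk; rewrite mxE hk /= mulr0.
rewrite mxE; under eq_bigr do rewrite H1.
rewrite (bigD1 c) //= big1 ?addr0 ?eqxx ?mulr1 //.
by move=> l /negbTE ->; rewrite mulr0 mul0r.
Qed.

Lemma choiE (p : {ffun bits n * bits n -> R}) :
  choi p = \sum_j (p j)%:C%C *: (vP j *m adjmx (vP j)).
Proof.
apply/matrixP => k l.
case: (mxtens_indexP k) => a b; case: (mxtens_indexP l) => c e.
rewrite /choi summxE.
under eq_bigr do rewrite summxE.
under eq_bigr do under eq_bigr do rewrite tensmxE mxE.
rewrite (sum_delta2 a c (fun i j => pauli_channel p (delta_mx i j) b e)).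
rewrite /pauli_channel !summxE; apply: eq_bigr => j _.
rewrite [LHS]mxE mul_delta_entry [RHS]mxE [in RHS]mxE big_ord1 vPE.
by rewrite /adjmx !mxE mxtens_indexK.
Qed.

End Choi.

Section Forms.
Variable R : realType.
Local Notation C := R[i].

Lemma Qform m (M : 'M[C]_m) (v : 'cV[C]_m) :
  (adjmx v *m M *m v) 0 0 = \sum_k \sum_l ((v k 0)^*%C * M k l * v l 0).
Proof.
rewrite mxE exchange_big /=; apply: eq_bigr => l _.
rewrite mxE mulr_suml; apply: eq_bigr => k _.
by rewrite /adjmx !mxE.
Qed.

Lemma trace_Q m (E : 'M[C]_m) (v : 'cV[C]_m) :
  \tr (E *m (v *m adjmx v)) = (adjmx v *m E *m v) 0 0.
Proof.
rewrite mulmxA mxtrace_mulC mulmxA /mxtrace big_ord1.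
by [].
Qed.

Lemma Re_sum (I : finType) (F : I -> C) : complex.Re (\sum_i F i) = \sum_i complex.Re (F i).
Proof.
apply: (big_morph (@complex.Re R)); last by [].
by move=> [x1 y1] [x2 y2].
Qed.

Lemma Re_realM (a : R) (z : C) : complex.Re (a%:C%C * z) = a * complex.Re z.
Proof. by case: z => x y /=; rewrite mul0r subr0. Qed.

End Forms.

Section Lin.
Variable R : realType.
Local Notation C := R[i].
Variable n : nat.

Definition xq (j : bits n * bits n) (E : 'M[C]_(qdim n * qdim n)) : R :=
  complex.Re ((adjmx (vP R j) *m E *m vP R j) 0 0).

Lemma fP_lin (p : {ffun bits n * bits n -> R}) E :
  fP p E = \sum_j p j * xq j E.
Proof.
rewrite /fP choiE mulmx_sumr.
rewrite (big_morph (@mxtrace _ _) (@mxtraceD _ _) (mxtrace0 _ _)).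
rewrite Re_sum; apply: eq_bigr => j _.
by rewrite -scalemxAr mxtraceZ trace_Q Re_realM.
Qed.

End Lin.

Section Bounds.
Variable R : realType.
Local Notation C := R[i].
Variable n : nat.
Local Notation d := (qdim n).

Lemma Q_sigma (sigma : 'M[C]_d) j :
  (adjmx (vP R j) *m (sigma *t (1%:M : 'M[C]_d)) *m vP R j) 0 0 = \tr sigma.
Proof.
rewrite Qform sum_tens /mxtrace; apply: eq_bigr => a _.
have E1 : forall b c, \sum_(e < d) ((vP R j (mxtens_index (a, b)) 0)^*%C *
       (sigma *t (1%:M : 'M[C]_d)) (mxtens_index (a, b)) (mxtens_index (c, e)) *
       vP R j (mxtens_index (c, e)) 0) =
    (sigma a c) * ((pauli R j.1 j.2 b a)^*%C * pauli R j.1 j.2 b c).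
  move=> b c; rewrite (bigD1 b) //= big1 ?addr0.
    by rewrite tensmxE !vPE [(1%:M : 'M[C]_d) _ _]mxE eqxx mulr1n; ring.
  by move=> e /negbTE he; rewrite tensmxE [(1%:M : 'M[C]_d) _ _]mxE eq_sym he mulr0n mulr0 mulr0 mul0r.
under eq_bigr do rewrite sum_tens.
under eq_bigr do under eq_bigr do rewrite E1.
rewrite exchange_big /= (bigD1 a) //= [X in _ + X]big1 ?addr0.
  by rewrite -mulr_sumr pauli_unit eqxx mulr1.
by move=> c /negbTE hc; rewrite -mulr_sumr pauli_unit eq_sym hc mulr0.
Qed.

Lemma xq_bounds (j : bits n * bits n) (E : 'M[C]_(d * d)) : is_test E -> 0 <= xq j E <= 1.
Proof.
move=> [HE [sigma [[_ Htr] Hs]]].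
have h1 := HE (vP R j).
have h2 := Hs (vP R j).
rewrite mulmxBr mulmxBl mxE Q_sigma Htr in h2.
rewrite lecE /= in h1; rewrite lecE /= in h2.
case/andP: h1 => _ h1; case/andP: h2 => _ h2.
rewrite /xq h1 /=.
move: h2; rewrite mxE; case: ((adjmx (vP R j) *m E *m vP R j) 0 0) => x y /=; lra.
Qed.

End Bounds.

Section Order.
Variable R : realType.
Variable m : nat.
Local Notation T := ('M[R[i]]_m * R)%type.

Definition code (e : T) : seq R :=
  e.2 :: ([seq complex.Re (e.1 ij.1 ij.2) | ij <- enum {: 'I_m * 'I_m}] ++
          [seq complex.Im (e.1 ij.1 ij.2) | ij <- enum {: 'I_m * 'I_m}]).

Lemma code_inj : injective code.
Proof.
move=> [A y] [B y'] [<-] /eqP.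
rewrite eqseq_cat ?size_map // => /andP [/eqP H1 /eqP H2].
congr (_, _); apply/matrixP => i j.
have hij : (i, j) \in enum {: 'I_m * 'I_m} by rewrite mem_enum.
have h1 := (proj2 (eq_in_map _ _ _) H1) _ hij.
have h2 := (proj2 (eq_in_map _ _ _) H2) _ hij.
move: h1 h2 => /=; case: (A i j) => a1 a2; case: (B i j) => b1 b2 /= -> ->.
by [].
Qed.

Definition leT (a b : T) : bool := ((code a : seqlexi R) <= (code b : seqlexi R))%O.

Lemma leT_total : total leT.
Proof. by move=> a b; rewrite /leT le_total. Qed.

Lemma leT_trans : transitive leT.
Proof. by move=> b a c; rewrite /leT; apply: le_trans. Qed.

Lemma leT_anti : antisymmetric leT.
Proof. by move=> a b /le_anti /code_inj. Qed.
End Order.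

Section Clamp.
Variable R : realType.
Definition clamp (y : R) : R := if y < 0 then 0 else if 1 < y then 1 else y.

Lemma clamp01 y : 0 <= clamp y <= 1.
Proof.
rewrite /clamp; case: ifP => h1; first by rewrite lexx ler01.
case: ifP => h2; first by rewrite ler01 lexx.
by move: h1 h2 => /negbT; rewrite -leNgt => -> /negbT; rewrite -leNgt => ->.
Qed.

Lemma clamp_near y t : 0 <= t <= 1 -> `|clamp y - t| <= `|y - t|.
Proof.
move=> /andP [t0 t1]; rewrite /clamp; case: ifP => h1.
  rewrite sub0r normrN (ger0_norm t0) ler0_norm; first lra.
  rewrite subr_le0; lra.
case: ifP => h2 //.
rewrite !ger0_norm ?subr_ge0 //; lra.
Qed.
End Clamp.

Lemma four_le_exp2 (R : realType) : 4 <= expR (2 : R).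
Proof.
have h := expR_ge1Dx (1 : R).
have -> : (2 : R) = 1 + 1 by [].
rewrite expRD.
have e0 : 0 <= expR (1 : R) by apply/ltW/expR_gt0.
nra.
Qed.

Theorem corollary3p17 (R : realType) :
  exists c : R, 0 < c /\
    forall (n : nat) (eps : R), 0 < eps < 1 ->
      exists k : nat, k%:R <= c * n%:R / eps ^+ 2 /\
        exists (kappa : {fset example R n} -> {fset example R n})
               (rho : {fset example R n} -> 'M[R[i]]_(qdim n * qdim n) -> R),
          pauli_compression_scheme eps (eps / 3) k kappa rho.
Proof.
exists 72; split; first lra.
move=> n eps /andP [e0 e1].
pose J := (bits n * bits n)%type.
pose ft := fun (E : 'M[R[i]]_(qdim n * qdim n)) (j : J) => xq j E.
pose eta := eps / 6. pose tau := 2 * eps / 3. pose mu := eps / 3. pose noise := eps / 3.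
pose xK := 72 * n%:R / eps ^+ 2.
have xK0 : 0 <= xK by rewrite /xK divr_ge0 ?mulr_ge0 ?exprn_ge0 // ltW.
pose K := Num.truncn xK.
exists K; split; first by rewrite truncn_le.
pose Tq := example R n.
pose runS := fun (s : seq Tq) => run ft (@leT R _) eta tau s K (fun _ => 0).
pose kappa := fun S : {fset Tq} => seq_fset tt (runS (enum_fset S)).
pose uF := fun s => final ft (@leT R _) eta tau s K (fun _ => 0).
pose rho := fun (S : {fset Tq}) E => clamp (predu ft eta (uF (enum_fset S)) E).
exists kappa, rho.
have Hher : forall S, uF (enum_fset (kappa S)) = uF (enum_fset S).
  move=> S; rewrite /uF /final.
  rewrite (@run_hered R J _ ft (@leT R _) (@leT_total R _) (@leT_trans R _) (@leT_anti R _)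
     eta tau (enum_fset S) (enum_fset (kappa S)) K (fun _ => 0)) //.
    by move=> x hx; rewrite /kappa; change (x \in seq_fset tt (runS (enum_fset S))); rewrite seq_fsetE.
  move=> x; change (x \in kappa S -> x \in enum_fset S); rewrite /kappa seq_fsetE.
  exact: run_sub (@leT_total R _) (@leT_trans R _) _ _ _ _ _ _.
have mu0 : 0 < mu by rewrite /mu divr_gt0.
have Kbound : forall M : nat, expR (M%:R * c0 mu) <= #|{: J}|%:R -> (M <= K)%N.
  move=> M H; rewrite truncn_ge_nat //.
  have hcard : #|{: J}|%:R <= expR (n%:R * 2 : R).
    rewrite card_prod card_ffun card_bool card_ord natrM natrX expRM_natl.
    have e2 : 0 <= expR (2 : R) by apply/ltW/expR_gt0.
    rewrite -exprMn; apply: lerXn2r; rewrite ?nnegrE //; have := four_le_exp2 R; lra.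
  have := le_trans H hcard; rewrite ler_expR /c0 /mu => H'.
  rewrite /xK ler_pdivlMr ?exprn_gt0 //.
  nra.
have core : forall p, pauli_prob p -> forall S : {fset Tq},
    (forall s, s \in S -> is_test s.1 /\ `|s.2 - fP p s.1| <= eps / 3) ->
    forall s, s \in S -> `|rho (kappa S) s.1 - fP p s.1| <= eps.
  move=> p [p0 p1] S HS s sS.
  have Hgood : forall t, t \in enum_fset S -> good ft (fun j => p j) noise t.
    move=> t tS; have [Ht Hn] := HS t tS; split.
      by move=> j; apply: xq_bounds.
    by rewrite /dotp -fP_lin.
  have Hnm := @learn R J _ ft (@leT R _) (@leT_total R _) (@leT_trans R _) eta tau
    (fun j => p j) mu noise p0 p1 mu0 ltac:(rewrite /eta /mu; field) 
    ltac:(rewrite /tau /noise /mu; field) K Kbound (enum_fset S) Hgood s sS.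
  rewrite /mistake -leNgt in Hnm.
  have Ht : 0 <= fP p s.1 <= 1.
    have Hx : forall j, 0 <= xq j s.1 <= 1 by move=> j; apply: xq_bounds; case: (HS s sS).
    rewrite fP_lin; apply/andP; split.
      by apply: sumr_ge0 => j _; apply: mulr_ge0 => //; case/andP: (Hx j).
    rewrite -p1; apply: ler_sum => j _; apply: ler_piMr => //; by case/andP: (Hx j).
  have [_ Hn] := HS s sS.
  rewrite /rho.
rewrite Hher; apply: le_trans (clamp_near _ Ht) _.
  have := ler_normD (predu ft eta (uF (enum_fset S)) s.1 - s.2) (s.2 - fP p s.1).
  rewrite addrA subrK => H; apply: le_trans H _.
  rewrite /uF; move: Hnm Hn; rewrite /tau; lra.
split; [|split; [|split]].
- move=> S; split.
    apply/fsubsetP => x; rewrite /kappa seq_fsetE => hx.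
    exact: run_sub (@leT_total R _) (@leT_trans R _) _ _ _ _ _ _ hx.
  rewrite /kappa size_seq_fset; apply: leq_trans (size_undup _) _.
  exact: size_run.
- by move=> S E _; apply: clamp01.
- move=> p Hp S HS; apply: (core p Hp S) => s sS; have [h1 h2] := HS s sS.
  split => //; rewrite h2 subrr normr0; lra.
- move=> p Hp S HS; apply: (core p Hp S) => s sS; have [h1 _ h3] := HS s sS.
  by split.
Qed.
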